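(* There exist $\rho_0>0$ and $K_0\ge1$ (depending only on $R$) such that for every $\ell=\ell_{(a,b,c,d)}\in\mathcal{L}_{SL_2}$, the map $F_\ell:\mathcal{L}_{SL_2}\to\mathbb{R}^3$, $F_\ell(\ell_{(a',b',c',d')})=(A,B,C)$ with $$A=(c,d)\cdot(d',-c'),\quad B=(a,b,c,d)\cdot(d',-c',b',-a'),\quad C=(a,b)\cdot(b',-a'),$$ is bilipschitz on $\{\ell'\in\mathcal{L}_{SL_2}: d(\ell,\ell')<\rho_0\}$ with bilipschitz constant at most $K_0$.
   Context: For $(a,b,c,d)\in\mathbb{R}^4$ with $ad-bc=1$, $\ell_{(a,b,c,d)}=\{(a,b,0)+s(c,d,1):s\in\mathbb{R}\}$; $\mathcal{L}_{SL_2}$ is the set of such lines, each identified with its parameter $(a,b,c,d)\in\mathbb{R}^4$, and $d(\cdot,\cdot)$ is the Euclidean distance between parameters (bilipschitz is with respect to this distance). A number $R\ge1$ is fixed and only lines whose parameter lies in $B(0,R)\subset\mathbb{R}^4$ are considered (i.e. $\mathcal{L}_{SL_2}$ stands for $\mathcal{L}_{SL_2}\cap B(0,R)$). *)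

(* Defs.v *)
From Stdlib Require Import Reals Lra.
Open Scope R_scope.

(* Parameters (a,b,c,d) of lines in R^4, and points of R^3. *)
Definition R4 : Type := (R * R * R * R)%type.
Definition R3 : Type := (R * R * R)%type.

Definition inSL2 (p : R4) : Prop :=
  let '(a, b, c, d) := p in a * d - b * c = 1.

Definition norm4 (p : R4) : R :=
  let '(a, b, c, d) := p in sqrt (a*a + b*b + c*c + d*d).
Definition dist4 (p q : R4) : R :=
  let '(a, b, c, d) := p in let '(a', b', c', d') := q in
  sqrt ((a-a')*(a-a') + (b-b')*(b-b') + (c-c')*(c-c') + (d-d')*(d-d')).
Definition dist3 (x y : R3) : R :=
  let '(u, v, w) := x in let '(u', v', w') := y in
  sqrt ((u-u')*(u-u') + (v-v')*(v-v') + (w-w')*(w-w')).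

(* L_SL2 ∩ B(0,R): parameters with ad-bc=1 lying in the open ball B(0,R). *)
Definition LSL2 (Rad : R) (p : R4) : Prop := inSL2 p /\ norm4 p < Rad.

Definition F (l l' : R4) : R3 :=
  let '(a, b, c, d) := l in let '(a', b', c', d') := l' in
  (c * d' - d * c',
   a * d' - b * c' + c * b' - d * a',
   a * b' - b * a').

(* Main.v *)
Require Import Defs.
From Stdlib Require Import Reals Lra Psatz.
Open Scope R_scope.

Lemma cs4 (u1 u2 u3 u4 v1 v2 v3 v4 : R) :
  (u1*v1+u2*v2+u3*v3+u4*v4)^2 <=
  (u1*u1+u2*u2+u3*u3+u4*u4)*(v1*v1+v2*v2+v3*v3+v4*v4).
Proof.
  assert (H: (u1*u1+u2*u2+u3*u3+u4*u4)*(v1*v1+v2*v2+v3*v3+v4*v4)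
    - (u1*v1+u2*v2+u3*v3+u4*v4)^2 =
    (u1*v2-u2*v1)^2+(u1*v3-u3*v1)^2+(u1*v4-u4*v1)^2+(u2*v3-u3*v2)^2
    +(u2*v4-u4*v2)^2+(u3*v4-u4*v3)^2) by ring.
  assert (0 <= (u1*v2-u2*v1)^2+(u1*v3-u3*v1)^2+(u1*v4-u4*v1)^2+(u2*v3-u3*v2)^2
    +(u2*v4-u4*v2)^2+(u3*v4-u4*v3)^2) by (repeat apply Rplus_le_le_0_compat; apply pow2_ge_0).
  lra.
Qed.

Lemma cs2 (u1 u2 v1 v2 : R) :
  (u1*v1+u2*v2)^2 <= (u1*u1+u2*u2)*(v1*v1+v2*v2).
Proof.
  assert (H: (u1*u1+u2*u2)*(v1*v1+v2*v2) - (u1*v1+u2*v2)^2 = (u1*v2-u2*v1)^2) by ring.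
  assert (0 <= (u1*v2-u2*v1)^2) by apply pow2_ge_0. lra.
Qed.

Lemma cs2m (d b P A : R) : (d*P - b*A)*(d*P - b*A) <= (d*d+b*b)*(P*P+A*A).
Proof.
  assert (H: (d*d+b*b)*(P*P+A*A) - (d*P - b*A)*(d*P - b*A) = (d*A+b*P)^2) by ring.
  assert (0 <= (d*A+b*P)^2) by apply pow2_ge_0. lra.
Qed.

Lemma sqrt_lt_sq (x r : R) : 0 <= x -> sqrt x < r -> x < r*r.
Proof.
  intros Hx H. assert (0 <= sqrt x) by apply sqrt_pos.
  rewrite <- (sqrt_sqrt x Hx). nra.
Qed.

Lemma sqrt_le_K (D M K : R) : 0 <= K -> 0 <= M -> D <= K*K*M -> sqrt D <= K * sqrt M.
Proof.
  intros HK HM H.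
  replace (K * sqrt M) with (sqrt (K*K*M)).
  - apply sqrt_le_1_alt; lra.
  - rewrite sqrt_mult by nra. rewrite sqrt_square by lra. reflexivity.
Qed.

Lemma sq4_nonneg (x y z w : R) : 0 <= x*x+y*y+z*z+w*w.
Proof. nra. Qed.

Theorem lemma2p5 (Rad : R) (HR : 1 <= Rad) :
  exists rho0 K0 : R, 0 < rho0 /\ 1 <= K0 /\
    forall l : R4, LSL2 Rad l ->
    forall l1 l2 : R4,
      LSL2 Rad l1 -> dist4 l l1 < rho0 ->
      LSL2 Rad l2 -> dist4 l l2 < rho0 ->
      / K0 * dist4 l1 l2 <= dist3 (F l l1) (F l l2) /\
      dist3 (F l l1) (F l l2) <= K0 * dist4 l1 l2.
Proof.
  exists (/ (2*Rad)), (2*Rad).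
  split; [apply Rinv_0_lt_compat; lra|]. split; [lra|].
  intros l Hl0 l1 l2 Hl10 Hd1 Hl20 Hd2.
  revert l1 l2 Hl10 Hl20 Hd1 Hd2; unfold R4 in *; destruct l as [[[a b] c] d]; intros [[[a1 b1] c1] d1] [[[a2 b2] c2] d2] Hl10 Hl20 Hd1 Hd2.
  destruct Hl0 as [Hl Hn]; destruct Hl10 as [Hl1 _]; destruct Hl20 as [Hl2 _].
  unfold inSL2, norm4, dist4, dist3, F in *.
  set (rho := / (2*Rad)) in *.
  assert (Hrho : rho * (2*Rad) = 1) by (unfold rho; field; lra).
  assert (Hrp : 0 < rho) by (unfold rho; apply Rinv_0_lt_compat; lra).
  apply sqrt_lt_sq in Hn; [|apply sq4_nonneg].
  apply sqrt_lt_sq in Hd1; [|apply sq4_nonneg].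
  apply sqrt_lt_sq in Hd2; [|apply sq4_nonneg].
  set (x := a1 - a2). set (y := b1 - b2). set (z := c1 - c2). set (w := d1 - d2).
  set (A := c*w - d*z). set (B := a*w - b*z + c*y - d*x). set (C := a*y - b*x).
  set (N := d*x - c*y - b*z + a*w).
  set (D2 := x*x+y*y+z*z+w*w).
  set (L2 := a*a+b*b+c*c+d*d).
  set (M2 := A*A+B*B+C*C).
  assert (HD : (a1-a2)*(a1-a2)+(b1-b2)*(b1-b2)+(c1-c2)*(c1-c2)+(d1-d2)*(d1-d2) = D2) by reflexivity.
  assert (HM : (c*d1-d*c1-(c*d2-d*c2))*(c*d1-d*c1-(c*d2-d*c2))
     + (a*d1-b*c1+c*b1-d*a1-(a*d2-b*c2+c*b2-d*a2))*(a*d1-b*c1+c*b1-d*a1-(a*d2-b*c2+c*b2-d*a2))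
     + (a*b1-b*a1-(a*b2-b*a2))*(a*b1-b*a1-(a*b2-b*a2)) = M2)
    by (unfold M2, A, B, C, x, y, z, w; ring).
  rewrite HM.
  assert (HD0 : 0 <= D2) by (apply sq4_nonneg).
  assert (HM0 : 0 <= M2).
  { unfold M2. assert (0 <= A*A) by apply Rle_0_sqr. assert (0 <= B*B) by apply Rle_0_sqr.
    assert (0 <= C*C) by apply Rle_0_sqr. lra. }
  assert (HL0 : 0 <= L2) by (apply sq4_nonneg).
  assert (Hup : M2 <= 3 * (L2 * D2)).
  { assert (hA : A*A <= L2*D2).
    { assert (h := cs2m c d w z). fold A in h.
      eapply Rle_trans; [exact h|].
      apply Rmult_le_compat; try (apply Rplus_le_le_0_compat; apply Rle_0_sqr).
      - unfold L2. assert (0<=a*a) by apply Rle_0_sqr. assert (0<=b*b) by apply Rle_0_sqr. lra.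
      - unfold D2. assert (0<=x*x) by apply Rle_0_sqr. assert (0<=y*y) by apply Rle_0_sqr. lra. }
    assert (hC : C*C <= L2*D2).
    { assert (h := cs2m a b y x). fold C in h.
      eapply Rle_trans; [exact h|].
      apply Rmult_le_compat; try (apply Rplus_le_le_0_compat; apply Rle_0_sqr).
      - unfold L2. assert (0<=c*c) by apply Rle_0_sqr. assert (0<=d*d) by apply Rle_0_sqr. lra.
      - unfold D2. assert (0<=z*z) by apply Rle_0_sqr. assert (0<=w*w) by apply Rle_0_sqr. lra. }
    assert (hB : B*B <= L2*D2).
    { assert (h := cs4 a b c d w (-z) y (-x)).
      replace (a*w + b*(-z) + c*y + d*(-x)) with B in h by (unfold B; ring).
      replace (w*w + -z*-z + y*y + -x*-x) with D2 in h by (unfold D2; ring).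
      fold L2 in h. rewrite <- Rsqr_pow2 in h. exact h. }
    unfold M2. lra. }
  assert (HN : 2*N = -((a1-a + (a2-a))*w + (d1-d + (d2-d))*x - (b1-b + (b2-b))*z - (c1-c+(c2-c))*y)).
  { assert (E0 : 2*N + ((a1-a + (a2-a))*w + (d1-d + (d2-d))*x - (b1-b + (b2-b))*z - (c1-c+(c2-c))*y)
       = 2*((a1*d1-b1*c1) - (a2*d2-b2*c2))) by (unfold N, x, y, z, w; ring).
    rewrite Hl1, Hl2 in E0. lra. }
  assert (HN1 := cs4 (a1-a) (d1-d) (-(b1-b)) (-(c1-c)) w x z y).
  assert (HN2 := cs4 (a2-a) (d2-d) (-(b2-b)) (-(c2-c)) w x z y).
  assert (HNb : N*N <= rho*rho*D2).
  { set (N1 := (a1-a)*w + (d1-d)*x + (-(b1-b))*z + (-(c1-c))*y) in *.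
    set (N2 := (a2-a)*w + (d2-d)*x + (-(b2-b))*z + (-(c2-c))*y) in *.
    assert (E : 2*N = -(N1+N2)) by (rewrite HN; unfold N1, N2; ring).
    assert (F1 : N1^2 <= rho*rho*D2).
    { eapply Rle_trans; [exact HN1|]. unfold D2.
      replace ((a1-a)*(a1-a)+(d1-d)*(d1-d)+(-(b1-b))*(-(b1-b))+(-(c1-c))*(-(c1-c)))
        with ((a-a1)*(a-a1)+(b-b1)*(b-b1)+(c-c1)*(c-c1)+(d-d1)*(d-d1)) by ring.
      replace (w*w+x*x+z*z+y*y) with D2 by (unfold D2; ring).
      fold D2. apply Rmult_le_compat_r; lra. }
    assert (F2 : N2^2 <= rho*rho*D2).
    { eapply Rle_trans; [exact HN2|]. unfold D2.
      replace ((a2-a)*(a2-a)+(d2-d)*(d2-d)+(-(b2-b))*(-(b2-b))+(-(c2-c))*(-(c2-c)))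
        with ((a-a2)*(a-a2)+(b-b2)*(b-b2)+(c-c2)*(c-c2)+(d-d2)*(d-d2)) by ring.
      replace (w*w+x*x+z*z+y*y) with D2 by (unfold D2; ring).
      fold D2. apply Rmult_le_compat_r; lra. }
    assert (4*(N*N) = (N1+N2)^2) by (replace (4*(N*N)) with ((2*N)*(2*N)) by ring; rewrite E; ring).
    assert (0 <= (N1-N2)^2) by apply pow2_ge_0.
    assert (X : (N1+N2)^2 + (N1-N2)^2 = 2*(N1^2) + 2*(N2^2)) by ring.
    lra. }
  assert (Hlow : D2 <= L2 * (M2 + N*N)).
  { set (P := a*w - b*z). set (Q := c*y - d*x).
    assert (Ew : w = d*P - b*A) by (transitivity ((a*d-b*c)*w); [rewrite Hl; ring | unfold P, Q, A, C; ring]).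
    assert (Ez : z = c*P - a*A) by (transitivity ((a*d-b*c)*z); [rewrite Hl; ring | unfold P, Q, A, C; ring]).
    assert (Ey : y = d*C - b*Q) by (transitivity ((a*d-b*c)*y); [rewrite Hl; ring | unfold P, Q, A, C; ring]).
    assert (Ex : x = c*C - a*Q) by (transitivity ((a*d-b*c)*x); [rewrite Hl; ring | unfold P, Q, A, C; ring]).
    assert (EPQ : P*P + Q*Q = (B*B + N*N)/2) by (unfold P, Q, B, N; field).
    assert (h1 : w*w <= (d*d+b*b)*(P*P+A*A)) by (rewrite Ew at 1 2; apply cs2m).
    assert (h2 : z*z <= (c*c+a*a)*(P*P+A*A)) by (rewrite Ez at 1 2; apply cs2m).
    assert (h3 : y*y <= (d*d+b*b)*(C*C+Q*Q)) by (rewrite Ey at 1 2; apply cs2m).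
    assert (h4 : x*x <= (c*c+a*a)*(C*C+Q*Q)) by (rewrite Ex at 1 2; apply cs2m).
    assert (S1 : D2 <= L2 * (P*P+A*A+C*C+Q*Q)).
    { unfold D2, L2.
      replace ((a*a+b*b+c*c+d*d)*(P*P+A*A+C*C+Q*Q)) with
        ((c*c+a*a)*(C*C+Q*Q) + (d*d+b*b)*(C*C+Q*Q) + (c*c+a*a)*(P*P+A*A) + (d*d+b*b)*(P*P+A*A)) by ring.
      lra. }
    eapply Rle_trans; [exact S1|]. apply Rmult_le_compat_l; [exact HL0|].
    assert (0 <= B*B) by apply Rle_0_sqr. assert (0 <= N*N) by apply Rle_0_sqr.
    unfold M2. lra. }
  assert (HL : L2 <= Rad*Rad) by (unfold L2; lra).
  split.
  - assert (Hk : D2 <= (2*Rad)*(2*Rad)*M2).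
    { assert (HRN : Rad*Rad*(N*N) <= D2/4).
      { assert (E1 : Rad*Rad*(rho*rho) = /4).
        { replace (Rad*Rad*(rho*rho)) with ((rho*(2*Rad))*(rho*(2*Rad))/4) by field.
          rewrite Hrho. field. }
        assert (H0N : 0 <= N*N) by apply Rle_0_sqr.
        assert (HRR : 0 <= Rad*Rad) by apply Rle_0_sqr.
        apply Rmult_le_compat_l with (r := Rad*Rad) in HNb; [|exact HRR].
        replace (Rad*Rad*(rho*rho*D2)) with (Rad*Rad*(rho*rho)*D2) in HNb by ring.
        rewrite E1 in HNb. lra. }
      assert (H0N : 0 <= N*N) by apply Rle_0_sqr.
      assert (T1 : L2 * (M2 + N*N) <= Rad*Rad*(M2+N*N)) by (apply Rmult_le_compat_r; lra).
      assert (HRR : 0 <= Rad*Rad) by apply Rle_0_sqr.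
      assert (T2 : Rad*Rad*M2 <= 4*(Rad*Rad*M2)) by (assert (0 <= Rad*Rad*M2) by (apply Rmult_le_pos; lra); lra).
      replace ((2*Rad)*(2*Rad)*M2) with (4*(Rad*Rad*M2)) by ring.
      replace (Rad*Rad*(M2+N*N)) with (Rad*Rad*M2 + Rad*Rad*(N*N)) in T1 by ring.
      lra. }
    assert (Hs := sqrt_le_K D2 M2 (2*Rad) ltac:(lra) HM0 Hk).
    apply (Rmult_le_reg_l (2*Rad)); [lra|].
    rewrite <- Rmult_assoc, (Rmult_comm (2*Rad) rho), Hrho. lra.
  - apply sqrt_le_K; [lra|exact HD0|].
    assert (T : L2*D2 <= Rad*Rad*D2) by (apply Rmult_le_compat_r; lra).
    assert (0 <= Rad*Rad*D2) by (apply Rmult_le_pos; [apply Rle_0_sqr|lra]).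
    replace (2*Rad*(2*Rad)*D2) with (4*(Rad*Rad*D2)) by ring.
    lra.
Qed.
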